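(* Let $\mathbb{F}_q$ be a fixed finite field with $q$ odd and $q\equiv1\pmod 4$. Then, as $g\to\infty$, $$\#\{P\in\mathbb{F}_q[T] \text{ monic irreducible}: \deg P=2g+1,\ L(\tfrac12,\chi_P)\neq 0\}\gg \frac{|P|}{(\log_q|P|)^2},$$ where $|P|=q^{2g+1}$ and $\log_q|P|=2g+1$.
   Context: $A=\mathbb{F}_q[T]$; for nonzero $f\in A$, $|f|=q^{\deg f}$. For a monic irreducible $Q$ and $a\in A$, $\left(\frac{a}{Q}\right)$ is $0$ if $Q\mid a$, $1$ if $a$ is a nonzero square mod $Q$, $-1$ otherwise; extended to monic $f=\prod Q_i^{e_i}$ by $\left(\frac{a}{f}\right)=\prod\left(\frac{a}{Q_i}\right)^{e_i}$, $\left(\frac{a}{1}\right)=1$. For monic irreducible $P$, $\chi_P(f)=\left(\frac{P}{f}\right)$. For $P$ of odd degree $2g+1$, $L(s,\chi_P)=\sum_{f\text{ monic}}\chi_P(f)|f|^{-s}$ is a polynomial in $u=q^{-s}$ of degree $2g$, and $L(\tfrac12,\chi_P)$ is its value at $u=q^{-1/2}$. The implied constant may depend on $q$. *)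

(* Defs.v *)
From HB Require Import structures.
From mathcomp Require Import all_boot all_order all_algebra all_field.
From Stdlib Require Import ClassicalEpsilon.
Set Implicit Arguments. Unset Strict Implicit. Unset Printing Implicit Defensive.
Import Order.TTheory GRing.Theory Num.Theory.
Local Open Scope ring_scope.

(* The monic polynomial T^n + sum_{i<n} c_i T^i; as c ranges over
   {ffun 'I_n -> F} this enumerates each monic polynomial of degree n once. *)
Definition mkmonic (F : finFieldType) (n : nat) (c : {ffun 'I_n -> F}) : {poly F} :=
  'X^n + \sum_(i < n) (c i)%:P * 'X^i.

Definition propb (P : Prop) : bool :=
  if excluded_middle_informative P then true else false.

Definition irrb (F : finFieldType) (Q : {poly F}) : bool := propb (irreducible_poly Q).

Definition legendre (F : finFieldType) (a Q : {poly F}) : int :=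
  if Q %| a then 0
  else if propb (exists b : {poly F}, Q %| a - b ^+ 2) then 1 else -1.

(* multiplicity e of Q in f (number of e >= 1 with Q^e | f, e <= deg f). *)
Definition mult (F : finFieldType) (Q f : {poly F}) : nat :=
  \sum_(1 <= e < size f) nat_of_bool (Q ^+ e %| f)%R.

(* (a/f) = prod over monic irreducible Q of (a/Q)^(v_Q(f)), for f monic;
   only Q with deg Q <= deg f can divide f. *)
Definition jacobi (F : finFieldType) (a f : {poly F}) : int :=
  \prod_(d < size f)
    \prod_(c : {ffun 'I_d -> F} | irrb (mkmonic c))
      legendre a (mkmonic c) ^+ mult (mkmonic c) f.

Definition chi (F : finFieldType) (P f : {poly F}) : int := jacobi P f.

(* coefficient of u^n in L(u, chi_P): sum over monic f of degree n *)
Definition Lcoef (F : finFieldType) (P : {poly F}) (n : nat) : int :=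
  \sum_(c : {ffun 'I_n -> F}) chi P (mkmonic c).

(* L(1/2, chi_P): the polynomial L(u,chi_P) (of degree 2g = deg P - 1)
   evaluated at u = q^(-1/2), computed in the algebraic numbers algC. *)
Definition Lhalf (F : finFieldType) (P : {poly F}) : algC :=
  \sum_(n < (size P).-1) (Lcoef P n)%:~R / (sqrtC (#|F|%:R)) ^+ n.

Definition nonvanish_count (F : finFieldType) (g : nat) : nat :=
  #|[pred c : {ffun 'I_(2 * g + 1) -> F} |
      irrb (mkmonic c) && (Lhalf (mkmonic c) != 0)]|.

(* Main.v *)
Require Import Defs.
From HB Require Import structures.
From mathcomp Require Import all_boot all_order all_algebra all_field zify ring lra.
From Stdlib Require Import ClassicalEpsilon.
Set Implicit Arguments. Unset Strict Implicit. Unset Printing Implicit Defensive.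
Import Order.TTheory GRing.Theory Num.Theory.
Local Open Scope ring_scope.
Lemma card_natr0 (F : finFieldType) : (#|F|%:R : F) = 0.
Proof.
have [p pr_p pcharFp] := finPcharP F.
have := finNzRing_gt1 F.
rewrite (card_pprimeChar pcharFp) natrX (pcharf0 pcharFp) expr0n.
by case: (logn _ _).
Qed.

Lemma ext_exists (F : finFieldType) k : (0 < k)%N ->
  {L : splittingFieldType F | #|FinFieldExtType L| = (#|F| ^ k)%N}.
Proof.
move=> k_gt0; set m := (#|F| ^ k)%N.
have m_gt1: (m > 1)%N by rewrite (ltn_exp2l 0) ?finNzRing_gt1.
have m_gt0 := ltnW m_gt1; have m1_gt0: (m.-1 > 0)%N by rewrite -ltnS prednK.
pose q (R : nzRingType) : {poly R} := 'X^m - 'X.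
have Dq R: q R = ('X^(m.-1) - 1) * ('X - 0).
  by rewrite /q subr0 mulrBl mul1r -exprSr prednK.
have /FinSplittingFieldFor[/= L splitLq]: q F != 0.
  by rewrite Dq monic_neq0 ?rpredM ?monicXsubC ?monicXnsubC.
rewrite [map_poly _ _]rmorphB rmorphXn /= map_polyX -/(q L) in splitLq.
have mL0 : (m%:R : L) = 0.
  by rewrite /m natrX -(rmorph_nat (in_alg L)) card_natr0 rmorph0 expr0n gtn_eqF.
exists L.
pose Fm := FinFieldExtType L.
have /finField_galois_generator[/= a _ Da]: (1 <= {:L})%VS by apply: sub1v.
pose Em := fixedSpace (a ^+ k)%g; rewrite dimv1 expn1 in Da.
have{splitLq} [zs DqL defL] := splitLq.
have Uzs: uniq zs.
  rewrite -separable_prod_XsubC -(eqp_separable DqL) Dq separable_root andbC.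
  rewrite /root !hornerE subr_eq0 eq_sym expr0n gtn_eqF ?oner_eq0 //=.
  rewrite cyclotomic.separable_Xn_sub_1 // -subn1 natrB // subr_eq0.
  by rewrite mL0 eq_sym oner_eq0.
suffices /eq_card->: Fm =i zs.
  apply: succn_inj; rewrite (card_uniqP _) //= -(size_prod_XsubC _ id).
  by rewrite -(eqp_size DqL) size_polyDl size_polyXn // size_polyN size_polyX.
have in_zs: zs =i Em.
  move=> z; rewrite -root_prod_XsubC -(eqp_root DqL) (sameP fixedSpaceP eqP).
  rewrite /root !hornerE subr_eq0 /= /m; congr (_ == z).
  elim: (k) => [|i IHi]; first by rewrite gal_id.
  by rewrite expgSr expnSr exprM IHi galM ?Da ?memvf.
suffices defEm: Em = {:L}%VS by move=> z; rewrite in_zs defEm memvf.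
apply/eqP; rewrite eqEsubv subvf -defL -[Em]subfield_closed agenvS //.
by rewrite subv_add sub1v; apply/span_subvP=> z; rewrite in_zs.
Qed.

Lemma ext_dim (F : finFieldType) (L : splittingFieldType F) :
  #|FinFieldExtType L| = (#|F| ^ \dim {:L})%N.
Proof.
have := card_vspace (fullv : {vspace finvect_type L}).
have := card_vspacef (Vector.class (finvect_type L)).
move=> <- ->. done.
Qed.
Lemma card_bigcup_leq (I T : finType) (P : pred I) (B : I -> {set T}) :
  (#|\bigcup_(i | P i) B i| <= \sum_(i | P i) #|B i|)%N.
Proof.
elim/big_rec2: _ => [|i u s _ IH]; first by rewrite cards0.
by apply: leq_trans (leq_card_setU _ _) _; rewrite leq_add2l.
Qed.

Lemma card_roots_leq (R : finFieldType) (p : {poly R}) : p != 0 ->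
  (#|[set x | root p x]| < size p)%N.
Proof.
move=> nz; rewrite cardE; apply: max_poly_roots => //.
  by apply/allP => x; rewrite mem_enum inE.
exact: enum_uniq.
Qed.
Lemma mkmonic_coef (F : finFieldType) n (p : {poly F}) :
  p \is monic -> size p = n.+1 -> mkmonic [ffun i : 'I_n => p`_i] = p.
Proof.
move=> mp sp; rewrite -[RHS]coefK poly_def sp big_ord_recr /= addrC /mkmonic.
have -> : p`_n = 1 by move: mp; rewrite monicE /lead_coef sp => /eqP.
rewrite scale1r; congr (_ + _); apply: eq_bigr => i _.
by rewrite ffunE mul_polyC.
Qed.

Lemma gen_minpoly (F : finFieldType) (L : splittingFieldType F) n (x : L) :
  (0 < n)%N -> \dim {:L} = n -> <<1; x>>%VS = fullv ->
  exists c : {ffun 'I_n -> F},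
    irreducible_poly (mkmonic c) /\ root (map_poly (in_alg L) (mkmonic c)) x.
Proof.
move=> n_gt0 dimL genx.
have /polyOver1P [p Dp] := minPolyOver 1%AS x.
have szm : size (minPoly 1%AS x) = n.+1.
  rewrite size_minPoly; congr _.+1.
  have := dim_Fadjoin 1%AS x; rewrite dimv1 muln1 => <-.
  by rewrite genx dimL.
have szp : size p = n.+1 by rewrite -szm Dp size_map_poly.
have mp : p \is monic by rewrite -(map_monic (in_alg L)) -Dp monic_minPoly.
exists [ffun i : 'I_n => p`_i]; rewrite mkmonic_coef //; split; last first.
  by rewrite -Dp root_minPoly.
split; first by rewrite szp ltnS.
move=> r szr rdvd.
have hd : map_poly (in_alg L) r %| minPoly 1%AS x by rewrite Dp dvdp_map.
have := minPoly_irr (alg_polyOver 1%AS r) hd.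
rewrite Dp eqp_map => /orP [//|].
move/eqp_size; rewrite size_map_poly size_poly1 => /eqP; rewrite (negbTE szr).
done.
Qed.

Lemma propbP (P : Prop) : propb P = true <-> P.
Proof. by rewrite /propb; case: excluded_middle_informative. Qed.

Lemma size_mkmonic (F : finFieldType) n (c : {ffun 'I_n -> F}) :
  size (mkmonic c) = n.+1.
Proof.
rewrite /mkmonic size_polyDl ?size_polyXn // ltnS.
apply: (big_ind (fun p : {poly F} => size p <= n)%N).
- by rewrite size_poly0.
- by move=> p r hp hr; apply: leq_trans (size_polyD _ _) _; rewrite geq_max hp hr.
- move=> i _; rewrite mul_polyC; apply: leq_trans (size_scale_leq _ _) _.
  by rewrite size_polyXn.
Qed.

Lemma nongen_pow (F : finFieldType) (L : splittingFieldType F) n (x : L) :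
  \dim {:L} = n -> <<1; x>>%VS != fullv ->
  exists2 d : 'I_n, (0 < d)%N & x ^+ (#|F| ^ d) = x.
Proof.
move=> dimL ngx.
have := Fermat's_little_theorem <<1; x>>%AS x; rewrite memv_adjoin /= => /esym/eqP hx.
have dlt : (\dim <<1; x>>%AS < n)%N.
  rewrite -dimL ltn_neqAle dimvS ?subvf // andbT.
  apply: contra ngx => /eqP e; rewrite eqEdim subvf /= e //.
exists (Ordinal dlt); first exact: adim_gt0.
exact: hx.
Qed.

Lemma sum_pow_bound q n : (5 <= q)%N -> (0 < n)%N ->
  (4 * \sum_(d < n | (0 < d)%N) q ^ d + q <= q ^ n)%N.
Proof.
move=> q5; rewrite big_mkcond /=; elim: n => // n IH _.
case: n IH => [|n] IH.
  by rewrite big_ord_recr big_ord0 /= expn1.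
rewrite big_ord_recr /=.
have := IH isT.
set S := (\sum_(_ < _) _)%N.
rewrite (expnS q n.+1); set Q := (q ^ n.+1)%N.
have : (5 * Q <= q * Q)%N by rewrite leq_mul2r q5 orbT.
lia.
Qed.

Lemma irr_count (F : finFieldType) n : (0 < n)%N -> (5 <= #|F|)%N ->
  (3 * #|F| ^ n <= 4 * (n * #|[pred c : {ffun 'I_n -> F} | irrb (mkmonic c)]|))%N.
Proof.
move=> n_gt0 q5.
have q1 : (1 < #|F|)%N by apply: leq_trans q5.
have [L cardL] := ext_exists F n_gt0.
have dimL : \dim {:L} = n by apply: (expnI q1); rewrite -ext_dim.
pose fL := FinFieldExtType L.
pose G := [set x : fL | <<1; (x : L)>>%VS == fullv].
have h1 : (#|G| <= n * #|[pred c : {ffun 'I_n -> F} | irrb (mkmonic c)]|)%N.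
  apply: leq_trans (subset_leq_card (_ : G \subset \bigcup_(c | irrb (mkmonic c))
     [set x : fL | root (map_poly (in_alg L) (mkmonic c) : {poly fL}) x])) _.
    apply/subsetP => x; rewrite inE => /eqP gx.
    have [c [irc rc]] := gen_minpoly n_gt0 dimL gx.
    by apply/bigcupP; exists c; rewrite ?inE //; apply/propbP.
  apply: leq_trans (card_bigcup_leq _ _) _.
  apply: (@leq_trans (\sum_(c | irrb (mkmonic c)) n)%N).
    apply: leq_sum => c _.
    have := @card_roots_leq fL (map_poly (in_alg L) (mkmonic c) : {poly fL}).
    rewrite size_map_poly size_mkmonic ltnS; apply.
    by rewrite -size_poly_eq0 size_map_poly size_mkmonic.
  by rewrite sum_nat_const mulnC.
have h2 : (4 * #|~: G| <= #|F| ^ n)%N.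
  apply: leq_trans (leq_mul (leqnn 4) (subset_leq_card (_ : ~: G \subset
     \bigcup_(d < n | (0 < d)%N) [set x : fL | x ^+ (#|F| ^ d) == x]))) _.
    apply/subsetP => x; rewrite !inE => ngx.
    have [d d0 hd] := nongen_pow dimL ngx.
    by apply/bigcupP; exists d; rewrite ?inE ?hd.
  apply: leq_trans (leq_mul (leqnn 4) (card_bigcup_leq _ _)) _.
  apply: leq_trans _ (leq_trans (leq_addr #|F| _) (sum_pow_bound q5 n_gt0)).
  rewrite leq_mul2l /=; apply: leq_sum => d d0.
  have qd1 : (1 < #|F| ^ d)%N by rewrite -(expn0 #|F|) ltn_exp2l.
  have -> : [set x : fL | x ^+ (#|F| ^ d) == x] =
            [set x : fL | root ('X^(#|F| ^ d) - 'X) x].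
    by apply/setP => x; rewrite !inE rootE !hornerE subr_eq0.
  have szp : size ('X^(#|F| ^ d) - 'X : {poly fL}) = (#|F| ^ d).+1.
    by rewrite size_polyDl ?size_polyXn // size_polyN size_polyX ltnS.
  have := @card_roots_leq fL ('X^(#|F| ^ d) - 'X : {poly fL}).
  rewrite szp ltnS; apply.
  by rewrite -size_poly_eq0 szp.
have := cardsC G; rewrite cardL.
lia.
Qed.
Lemma legendre_sq (F : finFieldType) (P Q : {poly F}) :
  irreducible_poly P -> irreducible_poly Q -> (size Q < size P)%N ->
  legendre P Q ^+ 2 = 1.
Proof.
move=> [szP hP] [szQ _] lt; rewrite /legendre.
case: ifP => [dv|_]; last by case: ifP.
have := hP Q; rewrite dv neq_ltn szQ orbT => /(_ isT isT) /eqp_size e.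
by rewrite e ltnn in lt.
Qed.

Lemma jacobi_sq (F : finFieldType) (P f : {poly F}) :
  irreducible_poly P -> (size f < size P)%N -> jacobi P f ^+ 2 = 1.
Proof.
move=> irP lt; rewrite /jacobi.
apply: (big_ind (fun x : int => x ^+ 2 = 1)) => //.
  by move=> x y hx hy; rewrite exprMn hx hy mulr1.
move=> d _; apply: (big_ind (fun x : int => x ^+ 2 = 1)) => //.
  by move=> x y hx hy; rewrite exprMn hx hy mulr1.
move=> c /propbP irc; rewrite -exprM mulnC exprM legendre_sq ?expr1n //.
by rewrite size_mkmonic; apply: leq_ltn_trans (ltn_ord d) lt.
Qed.

Lemma sum_pm1 (T : finType) (f : T -> int) :
  (forall x, f x ^+ 2 = 1) -> exists t, \sum_x f x = #|T|%:Z - 2 * t.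
Proof.
move=> hf.
have key : forall s : seq T, exists t, \sum_(x <- s) f x = (size s)%:Z - 2 * t.
  elim=> [|x s [t IH]]; first by exists 0; rewrite big_nil.
  rewrite big_cons IH /=.
  have := hf x; move/eqP; rewrite sqrf_eq1 => /orP [] /eqP ->.
    by exists t; lia.
  by exists (t + 1); lia.
have [t ht] := key (enum T); exists t.
by rewrite -big_enum /= cardE.
Qed.

Lemma Lcoef_odd (F : finFieldType) (P : {poly F}) n :
  odd #|F| -> irreducible_poly P -> (n.+1 < size P)%N ->
  exists t, Lcoef P n = 1 + 2 * t.
Proof.
move=> hodd irP lt.
have hsq : forall c : {ffun 'I_n -> F}, chi P (mkmonic c) ^+ 2 = 1.
  by move=> c; rewrite /chi jacobi_sq // size_mkmonic.
have [t ht] := @sum_pm1 _ (fun c : {ffun 'I_n -> F} => chi P (mkmonic c)) hsq.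
rewrite /Lcoef ht card_ffun card_ord.
have := odd_double_half (#|F| ^ n); rewrite oddX hodd orbT.
move: ((#|F| ^ n)./2) => h e; exists (h%:Z - t).
rewrite -e; lia.
Qed.
Lemma parity_sum (s : algC) (Q u : int) (a : nat -> int) m :
  s ^+ 2 = Q%:~R -> s != 0 -> Q = 1 + 2 * u ->
  (forall n, (n < m)%N -> exists t, a n = 1 + 2 * t) ->
  exists A B k : int, (\sum_(n < m) (a n)%:~R / s ^+ n) * s ^+ m = A%:~R + B%:~R * s
      /\ A + B = m%:Z + 2 * k.
Proof.
move=> hs s0 hQ; elim: m => [|m IH] ha.
  exists 0, 0, 0; split; last by [].
  by rewrite big_ord0 mul0r mulr0z mul0r addr0.
have [|A [B [k [hT hk]]]] := IH; first by move=> n hn; apply: ha; apply: ltnW.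
have [t ht] := ha m (ltnSn m).
exists (Q * B), (A + a m), (k + u * B + t); split; last first.
  rewrite hQ; lia.
rewrite big_ord_recr /= mulrDl exprSr mulrA hT.
rewrite [_ / _ * _]mulrA divfK ?expf_neq0 //.
rewrite intrM intrD -hs; ring.
Qed.

Lemma parity_nz (s : algC) (Q u : int) (a : nat -> int) g :
  s ^+ 2 = Q%:~R -> s != 0 -> Q = 1 + 2 * u ->
  (forall n, (n < 2 * g + 1)%N -> exists t, a n = 1 + 2 * t) ->
  \sum_(n < 2 * g + 1) (a n)%:~R / s ^+ n != 0.
Proof.
move=> hs s0 hQ ha; apply/eqP => h0.
have [A [B [k [hT hk]]]] := parity_sum hs s0 hQ ha.
rewrite h0 mul0r in hT.
have hA : A%:~R = - (B%:~R * s) :> algC by apply/eqP; rewrite -addr_eq0 -hT.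
have : (A ^+ 2)%:~R = (B ^+ 2 * Q)%:~R :> algC.
  by rewrite intrM !rmorphXn /= hA sqrrN exprMn hs.
move/intr_inj => hsq.
have eA : A = 1 + 2 * (g%:Z + k) - B by move: hk; lia.
move: hsq; rewrite eA hQ => hsq.
set w := g%:Z + k.
have e2 : (1 + 2 * w - B) ^+ 2 - B ^+ 2 * (1 + 2 * u) =
   1 + 2 * (2 * w + 2 * w ^+ 2 - B - 2 * w * B - u * B ^+ 2) by ring.
rewrite hsq subrr in e2.
move: (2 * w + _ - _ - _ - _) e2 => X e2; lia.
Qed.

Lemma Lhalf_nz (F : finFieldType) g (c : {ffun 'I_(2 * g + 1) -> F}) :
  odd #|F| -> (#|F| %% 4 = 1)%N -> irrb (mkmonic c) -> Lhalf (mkmonic c) != 0.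
Proof.
move=> hodd h4 /propbP irc; rewrite /Lhalf size_mkmonic /=.
apply: (@parity_nz _ (#|F|%:Z) (2 * (#|F| %/ 4))%N%:Z).
- by rewrite sqrtCK.
- by rewrite sqrtC_eq0 pnatr_eq0 -lt0n (leq_trans _ (finNzRing_gt1 F)).
- have := divn_eq #|F| 4; rewrite h4; lia.
- move=> n hn; apply: Lcoef_odd => //.
  by rewrite size_mkmonic ltnS.
Qed.

Theorem corollary2p6 (F : finFieldType) (hodd : odd #|F|) (h4 : (#|F| %% 4 = 1)%N) :
  exists C : rat, 0 < C /\
    exists g0 : nat, forall g : nat, (g0 <= g)%N ->
      C * (#|F| ^ (2 * g + 1))%N%:R
        <= (nonvanish_count F g)%:R * ((2 * g + 1) ^ 2)%N%:R.
Proof.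
have q5 : (5 <= #|F|)%N.
  have q1 : (1 < #|F|)%N := finNzRing_gt1 F.
  have := divn_eq #|F| 4; rewrite h4; lia.
exists (3%:R / 4%:R); split; first by [].
exists 0%N => g _.
have -> : nonvanish_count F g = #|[pred c : {ffun 'I_(2 * g + 1) -> F} | irrb (mkmonic c)]|.
  apply: eq_card => c; rewrite !inE /=.
  by case: (boolP (irrb _)) => //= ir; rewrite Lhalf_nz.
have n0 : (0 < 2 * g + 1)%N by rewrite addn1.
have := irr_count n0 q5.
move: (#|[pred c : {ffun 'I_(2 * g + 1) -> F} | irrb (mkmonic c)]|) => N H.
have H' : (3 * #|F| ^ (2 * g + 1) <= 4 * (N * (2 * g + 1) ^ 2))%N.
  apply: leq_trans H _; rewrite leq_mul2l /= mulnC leq_mul2l expnS expn1.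
  by rewrite leq_pmulr ?addn1 ?orbT.
move: H'; rewrite -(ler_nat rat) !natrM.
move: (#|F| ^ _)%N%:R (N%:R * _) => X Y; lra.
Qed.
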